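(* Let $(g,f)$ be a Riordan matrix with $f(t)=\sum_{j\ge1}f_jt^j$; set $f_0=f_{-1}=0$ and $\tilde f_j=f_{j-1}$ for $j\ge0$ (so $\tilde f_0=\tilde f_1=0$). For a sequence $(b_j)_{j\ge0}$ set $\tilde b_0=0$ and $\tilde b_j=b_{j-1}$ for $j\ge1$. Then $(b_j)_{j\ge0}$ is a type-I $B$-sequence of $(g,f)$ if and only if $f_1=1$, $f_3=f_2^2$, for every $\ell\ge1$ $$b_{\ell-1}=f_{2\ell}-\sum_{\mathbf i=(i_1,\dots,i_k)\in\mathcal D_{2\ell,\ell-1}}\tilde b_k\,\tilde f_{i_1}\tilde f_{i_2}\cdots\tilde f_{i_k},$$ and for every $\ell\ge2$ $$f_{2\ell+1}=\sum_{\mathbf i=(i_1,\dots,i_k)\in\mathcal D_{2\ell+1}}\tilde b_k\,\tilde f_{i_1}\cdots\tilde f_{i_k} = f_2f_{2\ell}+\sum_{\mathbf i=(i_1,\dots,i_k)\in\mathcal D'_{2\ell+1,\ell}}\tilde b_k\,\tilde f_{i_1}\cdots\tilde f_{i_k}.$$ (Thus $b_0=f_2$, $b_1=f_4-b_0^3$, $f_5=b_0^4+3b_0b_1$, $b_2=f_6-b_0^5-5b_0^2b_1$, etc., with $f_{2\ell}$ arbitrary.)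
   Context: Let $K$ be $\mathbb{R}$ or $\mathbb{C}$. A (proper) Riordan matrix is a pair $(g,f)$ of formal power series in $K[[t]]$ with $g(0)=1$, $f(0)=0$, $f'(0)\neq 0$, identified with the infinite lower triangular matrix $(d_{n,k})_{n,k\ge0}$, $d_{n,k}=[t^n]g(t)f(t)^k$; we set $d_{n,k}=0$ if $n<0$, $k<0$ or $k>n$. A type-I $B$-sequence of $(g,f)$ is a sequence $(b_j)_{j\ge0}$ such that $d_{n+1,k}=d_{n,k-1}+\sum_{j\ge0}b_j d_{n-j,k+j}$ for all $n\ge0$ and $k\ge1$. For positive integers $n,m,k$, $\mathcal D_{n,m,k}$ is the set of tuples $(i_1,\dots,i_k)$ of positive integers with $i_1+\cdots+i_k=n$ (here $k\le m$); $\mathcal D_{n,m}=\bigcup_{k=1}^m\mathcal D_{n,m,k}$ (compositions of $n$ into at most $m$ parts), $\mathcal D_n=\mathcal D_{n,n}$ (all compositions of $n$), and $\mathcal D'_{n,m}=\bigcup_{k=2}^m\mathcal D_{n,m,k}$. By convention $\mathcal D_{2,0}=\emptyset$ (empty sums are $0$). In each sum, $k$ is the length of the composition $\mathbf i$. *)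

(* Defs.v *)
(* Formal power series over K are represented by their
   coefficient sequences nat -> K. *)
From HB Require Import structures.
From mathcomp Require Import all_boot all_order all_algebra.
Set Implicit Arguments. Unset Strict Implicit. Unset Printing Implicit Defensive.
Import Order.TTheory GRing.Theory Num.Theory.
Local Open Scope ring_scope.

Section Riordan.
Variable K : numFieldType.

Fixpoint fps_pow (f : nat -> K) (k : nat) (n : nat) : K :=
  match k with
  | 0 => (n == 0%N)%:R
  | k'.+1 => \sum_(i < n.+1) f i * fps_pow f k' (n - i)
  end.

(* d_{n,k} = [t^n] g(t) f(t)^k  (automatically 0 when k > n since f 0 = 0) *)
Definition riordan_entry (g f : nat -> K) (n k : nat) : K :=
  \sum_(i < n.+1) g i * fps_pow f k (n - i).

Definition is_riordan (g f : nat -> K) : Prop :=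
  g 0%N = 1 /\ f 0%N = 0 /\ f 1%N != 0.

(* type-I B-sequence: d_{n+1,k} = d_{n,k-1} + sum_{j>=0} b_j d_{n-j,k+j},
   n >= 0, k >= 1; terms with j > n vanish since d_{n-j,.} = 0 for n-j < 0. *)
Definition is_typeI_Bseq (g f b : nat -> K) : Prop :=
  forall n k : nat, (1 <= k)%N ->
    riordan_entry g f n.+1 k =
    riordan_entry g f n k.-1 +
    \sum_(j < n.+1) b j * riordan_entry g f (n - j) (k + j).

Definition shift_seq (s : nat -> K) (j : nat) : K :=
  if j is j'.+1 then s j' else 0.

Definition comp_sum (bt ft : nat -> K) (n kmin kmax : nat) : K :=
  \sum_(kmin <= k < kmax.+1)
     \sum_(t : k.-tuple 'I_n.+1 |
            all (fun i : 'I_n.+1 => (0 < val i)%N) t &&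
            (sumn (map val t) == n))
        bt k * \prod_(i <- t) ft (val i).

End Riordan.

(* Main.v *)
Require Import Defs.
From HB Require Import structures.
From mathcomp Require Import all_boot all_order all_algebra.
From mathcomp Require Import zify.
Import Order.TTheory GRing.Theory Num.Theory.
Local Open Scope ring_scope.

Lemma tuple_sum_pow (K : numFieldType) (F : nat -> K) (N : nat) (k : nat) :
  forall m, (m <= N)%N ->
  \sum_(t : k.-tuple 'I_N.+1 | sumn (map val t) == m) \prod_(i <- t) F (val i)
  = fps_pow F k m.
Proof.
elim: k => [|k IH] m hm.
  case: m hm => [|m] hm /=.
    rewrite (big_pred1 [tuple]) ?big_nil // => t; by rewrite tuple0.
  by rewrite big_pred0 // => t; rewrite tuple0.
pose h := fun p : 'I_N.+1 * k.-tuple 'I_N.+1 => cons_tuple p.1 p.2.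
rewrite (reindex h) /=; last first.
  exists (fun t : k.+1.-tuple 'I_N.+1 => (thead t, [tuple of behead t])).
    by move=> [x t] _ /=; congr pair; apply: val_inj.
  move=> t _; apply: val_inj => /=; case: t => [[|x s] //= _].
rewrite -(pair_big_dep xpredT (fun x t => sumn (map val (h (x, t))) == m)
   (fun x t => \prod_(i <- h (x, t)) F (val i))) /=.
have E : forall x : 'I_N.+1, 
  \sum_(t : k.-tuple 'I_N.+1 | (x + sumn (map val t))%N == m)
      \prod_(i <- h (x, t)) F (val i)
  = if (x <= m)%N then F x * fps_pow F k (m - x) else 0.
  move=> x; case: leqP => hx.
    rewrite -IH; last by lia.
    rewrite mulr_sumr; apply: eq_big => [t|t _]; first by apply/eqP/eqP; lia.
    by rewrite /h /= big_cons.
  by rewrite big_pred0 // => t; apply/eqP; lia.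
rewrite (eq_bigr _ (fun x _ => E x)) /=.
rewrite [RHS](big_ord_widen N.+1 (fun x => F x * fps_pow F k (m - x))); last by lia.
rewrite [RHS]big_mkcond /=; apply: eq_bigr => i _. by rewrite ltnS.
Qed.

Lemma prod_zero (K : numFieldType) (F : nat -> K) N (s : seq 'I_N) :
  F 0%N = 0 -> ~~ all (fun i : 'I_N => (0 < val i)%N) s -> \prod_(i <- s) F (val i) = 0.
Proof.
move=> F0; elim: s => [|x s IH] //=.
rewrite big_cons negb_and; case/orP => [|/IH ->]; last by rewrite mulr0.
by rewrite lt0n negbK => /eqP ->; rewrite F0 mul0r.
Qed.

Lemma comp_sum_eq (K : numFieldType) (bt F : nat -> K) n a c :
  F 0%N = 0 ->
  comp_sum bt F n a c = \sum_(a <= k < c.+1) bt k * fps_pow F k n.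
Proof.
move=> F0; rewrite /comp_sum; apply: eq_bigr => k _.
rewrite -(@tuple_sum_pow _ F n k n (leqnn n)) mulr_sumr.
rewrite [in RHS](bigID (fun t : k.-tuple 'I_n.+1 => all (fun i : 'I_n.+1 => (0 < val i)%N) t)) /=.
rewrite [X in _ = _ + X]big1 ?addr0; last first.
  by move=> t /andP[_ h]; rewrite prod_zero ?mulr0.
by apply: eq_bigl => t; rewrite andbC.
Qed.

Definition tp {K : numFieldType} (M : nat) (a : nat -> K) : {poly K} := \poly_(i < M) a i.

Lemma powcoef (K : numFieldType) (p : {poly K}) (a : nat -> K) M :
  (forall i, (i < M)%N -> p`_i = a i) ->
  forall k m, (m < M)%N -> (p ^+ k)`_m = fps_pow a k m.
Proof.
move=> hp; elim=> [|k IH] m hm; first by rewrite expr0 coef1.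
rewrite exprS coefM /=; apply: eq_bigr => i _.
by rewrite hp ?IH //; [lia|move: (ltn_ord i); lia].
Qed.

Lemma entry_coef (K : numFieldType) (g f : nat -> K) M m k :
  (m < M)%N -> riordan_entry g f m k = (tp M g * tp M f ^+ k)`_m.
Proof.
move=> hm; rewrite coefM /riordan_entry; apply: eq_bigr => i _.
rewrite (@powcoef _ _ f M); last by lia.
  by rewrite /tp coef_poly; case: ifP => //; move: (ltn_ord i); lia.
by move=> j hj; rewrite /tp coef_poly hj.
Qed.

Lemma vanish (K : numFieldType) (F : nat -> K) :
  F 0%N = 0 -> F 1%N = 0 -> forall k m, (m < 2 * k)%N -> fps_pow F k m = 0.
Proof.
move=> F0 F1; elim=> [|k IH] m hm; first by lia.
rewrite /= big1 // => [[[|[|i]] hi]] _ /=; rewrite ?F0 ?F1 ?mul0r //.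
by rewrite IH ?mulr0 //; lia.
Qed.

Definition Hs {K : numFieldType} (f b : nat -> K) (i : nat) : K :=
  (i == 1%N)%:R + \sum_(1 <= k < i.+1) shift_seq b k * fps_pow (shift_seq f) k i.

Lemma keyA (K : numFieldType) (g f b : nat -> K) n k' : f 0%N = 0 ->
  riordan_entry g f n.+1 k'.+1 - (riordan_entry g f n k' +
     \sum_(j < n.+1) b j * riordan_entry g f (n - j) (k'.+1 + j))
  = \sum_(i < n.+2) (tp n.+2 g * tp n.+2 f ^+ k')`_(n.+1 - i) * (f i - Hs f b i).
Proof.
move=> f0.
set M := n.+2. set P := tp M g * tp M f ^+ k'. set X := tp M f * 'X.
set Q := 'X + \sum_(j < n.+1) b j *: X ^+ j.+1.
have e1 : riordan_entry g f n.+1 k'.+1 = (P * tp M f)`_n.+1.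
  by rewrite (@entry_coef _ _ _ M) // exprSr mulrA.
have e2 : riordan_entry g f n k' = (P * 'X)`_n.+1.
  by rewrite coefMX (@entry_coef _ _ _ M).
have e3 : forall j : 'I_n.+1,
    riordan_entry g f (n - j) (k'.+1 + j) = (P * X ^+ j.+1)`_n.+1.
  move=> j; rewrite exprMn mulrA coefMXn ltnNge ltn_ord /= subSS.
  rewrite (@entry_coef _ _ _ M); last by lia.
  by rewrite /P -mulrA -exprD addnS.
have e4 : (P * (tp M f - Q))`_n.+1 = riordan_entry g f n.+1 k'.+1 - (riordan_entry g f n k' +
     \sum_(j < n.+1) b j * riordan_entry g f (n - j) (k'.+1 + j)).
  rewrite e1 e2 mulrBr coefB /Q mulrDr coefD mulr_sumr coef_sum; congr (_ - (_ + _)).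
  by apply: eq_bigr => j _; rewrite e3 -scalerAr coefZ.
rewrite -e4 mulrC coefM; apply: eq_bigr => i _; rewrite mulrC; congr (_ * _).
have hi : (i < M)%N by [].
rewrite coefB /tp coef_poly hi /Q coefD coefX coef_sum /Hs opprD addrA.
rewrite [in RHS]opprD [in RHS]addrA; congr (_ - _).
transitivity (\sum_(j < n.+1) b j * fps_pow (shift_seq f) j.+1 i).
  apply: eq_bigr => j _; rewrite coefZ (@powcoef _ _ (shift_seq f) M) //.
  by move=> l hl; rewrite /X coefMX coef_poly; case: l hl => [|l] //= hl; rewrite ltnW.
rewrite -(big_mkord xpredT (fun j => b j * fps_pow (shift_seq f) j.+1 i)).
transitivity (\sum_(1 <= k < n.+2) shift_seq b k * fps_pow (shift_seq f) k i).
  by rewrite (big_add1 _ _ 0 n.+2 xpredT).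
rewrite (@big_cat_nat _ _ _ i.+1) /=; [|by []|by move: (ltn_ord i); lia].
rewrite [X in _ + X]big_nat_cond [X in _ + X]big1 ?addr0 // => k /andP[/andP[hk _] _].
by rewrite vanish ?mulr0 //; lia.
Qed.

Lemma Bseq_iff (K : numFieldType) (g f b : nat -> K) : is_riordan g f ->
  (is_typeI_Bseq g f b <-> forall i, f i = Hs f b i).
Proof.
move=> [g0 [f0 _]]; split.
  move=> hB m; elim: m {-2}m (leqnn m) => [|m IH] j hj.
    have -> : j = 0%N by lia.
    by rewrite /Hs f0 big_geq // addr0.
  case: (ltnP j m.+1) => hjm; first by apply: IH; lia.
  have -> : j = m.+1 by lia.
  have := @keyA _ g f b m 0 f0; rewrite (hB m 1%N) // subrr.
  rewrite big_ord_recr /= big1 ?add0r; last first.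
    by move=> i _; rewrite -IH ?subrr ?mulr0 //; move: (ltn_ord i); lia.
  rewrite expr0 mulr1 subnn /tp coef_poly /= g0 mul1r => /esym /eqP.
  by rewrite subr_eq0 => /eqP.
move=> hH n [//|k'] _; apply/eqP; rewrite -subr_eq0; apply/eqP.
rewrite keyA // big1 // => i _; by rewrite -hH subrr mulr0.
Qed.

Lemma pow1 (K : numFieldType) (F : nat -> K) m : fps_pow F 1 m = F m.
Proof.
rewrite /= big_ord_recr /= subnn mulr1 big1 ?add0r // => i _.
by rewrite subn_eq0 leqNgt ltn_ord mulr0.
Qed.

Lemma diag (K : numFieldType) (F : nat -> K) :
  F 0%N = 0 -> F 1%N = 0 -> forall k, fps_pow F k (2 * k) = F 2%N ^+ k.
Proof.
move=> F0 F1; elim=> [|k IH]; first by rewrite expr0.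
have -> : (2 * k.+1 = (2 * k).+2)%N by lia.
rewrite /= !big_ord_recl /= F0 F1 !mul0r !add0r big1 ?addr0.
  by rewrite subn2 /= IH exprS.
move=> i _; rewrite (@vanish _ F F0 F1) ?mulr0 //; move: (ltn_ord i); rewrite /bump /=; lia.
Qed.

Lemma even_S (K : numFieldType) (f b : nat -> K) l : f 0%N = 0 -> (1 <= l)%N ->
  \sum_(1 <= k < (2 * l).+1) shift_seq b k * fps_pow (shift_seq f) k (2 * l)
  = \sum_(1 <= k < l.-1.+1) shift_seq b k * fps_pow (shift_seq f) k (2 * l)
    + b l.-1 * f 1%N ^+ l.
Proof.
move=> f0 hl; rewrite prednK //.
rewrite (@big_cat_nat _ _ _ l 1 (2 * l).+1) /=; [|by []|lia].
rewrite (@big_ltn _ _ _ l (2 * l).+1); last by lia.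
rewrite [X in _ + (_ + X)]big_nat_cond [X in _ + (_ + X)]big1 ?addr0.
  by rewrite diag //; case: l hl.
move=> k /andP[/andP[hk _] _]; rewrite (@vanish _ (shift_seq f) erefl f0) ?mulr0 //; lia.
Qed.

Lemma odd_S (K : numFieldType) (f b : nat -> K) l : f 0%N = 0 -> (1 <= l)%N ->
  \sum_(1 <= k < (2 * l).+2) shift_seq b k * fps_pow (shift_seq f) k (2 * l).+1
  = b 0%N * f (2 * l)%N + 
    \sum_(2 <= k < l.+1) shift_seq b k * fps_pow (shift_seq f) k (2 * l).+1.
Proof.
move=> f0 hl.
rewrite (@big_ltn _ _ _ 1 (2 * l).+2); last by lia.
rewrite (@big_cat_nat _ _ _ l.+1 2 (2 * l).+2); [|lia|lia].
rewrite pow1.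
rewrite [X in _ + (_ + X)]big_nat_cond [X in _ + (_ + X)]big1 ?addr0 //.
move=> k /andP[/andP[hk _] _]; rewrite (@vanish _ (shift_seq f) erefl f0) ?mulr0 //; lia.
Qed.

Theorem theorem2p4 (K : numFieldType) (g f b : nat -> K) :
  is_riordan g f ->
  (is_typeI_Bseq g f b <->
   [/\ f 1%N = 1,
       f 3%N = f 2%N ^+ 2,
       (forall l : nat, (1 <= l)%N ->
          b l.-1 = f (2 * l)%N
                   - comp_sum (shift_seq b) (shift_seq f) (2 * l) 1 l.-1) &
       (forall l : nat, (2 <= l)%N ->
          f (2 * l).+1 = comp_sum (shift_seq b) (shift_seq f) (2 * l).+1 1 (2 * l).+1
          /\ comp_sum (shift_seq b) (shift_seq f) (2 * l).+1 1 (2 * l).+1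
             = f 2%N * f (2 * l)%N
               + comp_sum (shift_seq b) (shift_seq f) (2 * l).+1 2 l)]).
Proof.
move=> hR; have [g0 [f0 _]] := hR.
rewrite (@Bseq_iff _ g f b hR).
have cs := fun n a c => @comp_sum_eq K (shift_seq b) (shift_seq f) n a c erefl.
have nz1 : forall l, (1 <= l)%N -> ((2 * l)%N == 1%N) = false.
  by move=> l hl; apply/eqP; lia.
have nz2 : forall l, (1 <= l)%N -> ((2 * l).+1 == 1%N) = false.
  by move=> l hl; apply/eqP; lia.
split.
- move=> E.
  have f1 : f 1%N = 1.
    by rewrite E /Hs big_nat1 pow1 /= f0 mulr0 addr0.
  have ev : forall l, (1 <= l)%N -> f (2 * l)%N =
     \sum_(1 <= k < l.-1.+1) shift_seq b k * fps_pow (shift_seq f) k (2 * l) + b l.-1.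
    by move=> l hl; rewrite {1}E /Hs even_S // f1 expr1n mulr1 nz1 // add0r.
  have od : forall l, (1 <= l)%N -> f (2 * l).+1 =
     b 0%N * f (2 * l)%N + 
    \sum_(2 <= k < l.+1) shift_seq b k * fps_pow (shift_seq f) k (2 * l).+1.
    by move=> l hl; rewrite {1}E /Hs odd_S // nz2 // add0r.
  have b0 : b 0%N = f 2%N by rewrite (ev 1%N) // big_geq // add0r.
  split.
  + exact: f1.
  + by rewrite (od 1%N) // big_geq // addr0 b0 expr2.
  + by move=> l hl; rewrite cs (ev l hl) addrC addKr.
  + move=> l hl; rewrite !cs; split.
      by rewrite {1}E /Hs nz2 ?add0r //; lia.
    by rewrite odd_S ?b0 //; lia.
- move=> [f1 f3 hev' hod'] m.
  have hev : forall l, (1 <= l)%N -> b l.-1 = f (2 * l)%N -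
     \sum_(1 <= k < l.-1.+1) shift_seq b k * fps_pow (shift_seq f) k (2 * l).
    by move=> l hl; rewrite -cs; exact: hev'.
  have hod : forall l, (2 <= l)%N -> f (2 * l).+1 =
     \sum_(1 <= k < (2 * l).+2) shift_seq b k * fps_pow (shift_seq f) k (2 * l).+1.
    by move=> l hl; rewrite -cs; exact: (hod' l hl).1.
  case: m => [|[|m]].
  + by rewrite /Hs big_geq // addr0.
  + by rewrite /Hs big_nat1 pow1 /= f0 mulr0 addr0.
  have [l [e|e]] : exists l, m.+2 = (2 * l)%N \/ m.+2 = (2 * l).+1.
    exists m.+2./2; have := odd_double_half m.+2.
    by case: (odd m.+2) => /= h; [right|left]; rewrite -mul2n in h; lia.
  + rewrite e /Hs even_S; [|by []|lia].
    rewrite nz1; last by lia.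
    rewrite add0r f1 expr1n mulr1 (hev l); last by lia.
    by rewrite addrC addrNK.
  + rewrite e /Hs nz2 ?add0r; last by lia.
    case: l e => [|[|l']] e; first by lia.
      rewrite odd_S // big_geq // addr0 f3.
      by rewrite (hev 1%N) // big_geq // subr0 expr2.
    exact: (hod l'.+2 isT).
Qed.
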